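(* Let $\mu:[0,1)\to(0,\infty)$ be decreasing and continuous with $\lim_{r\to1^-}\mu(r)=0$, and suppose there is $B>0$ with $\mu(1-d/2)\ge B\mu(1-d)$ for all $d\in(0,1]$. Suppose moreover that for every $q>1$ there exist $A(q)>1$ and $y_0$ such that for all $y>y_0$ and $x>qy$ one has $\mu(1-1/y)>A(q)\,\mu(1-1/x)$. Let $u(z)=\operatorname{Re}\sum_k a_{n_k}z^{n_k}$ be a Hadamard gap series ($n_k$ positive integers, $n_{k+1}\ge\lambda n_k$, $\lambda>1$). If $\sup_k n_k|a_{n_k}|\,\mu(1-1/n_k)<\infty$, then $u\in\mathcal{B}_\mu$.
   Context: The Bloch-type space $\mathcal{B}_\mu$ is the set of harmonic functions $u$ on the unit disk $\mathbb{D}$ with $\|u\|_{\mathcal{B}_\mu}=\sup_{z\in\mathbb{D}}\big(|u(0)|+\mu(|z|)\,|\nabla u(z)|\big)<\infty$. *)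

(* Defs.v *)
(* classical real numbers. Points of the unit disk are pairs
   (x,y) of reals, z = x + i y; complex numbers are encoded as pairs of reals. *)
From Stdlib Require Import Reals Lra.
Open Scope R_scope.

(* z^n for z = x + i y, as (Re, Im). *)
Fixpoint cpow (x y : R) (n : nat) : R * R :=
  match n with
  | O => (1, 0)
  | S m => let (p, q) := cpow x y m in (x * p - y * q, x * q + y * p)
  end.

(* Re (a * z^m) with a = ar + i ai. *)
Definition re_term (ar ai : R) (m : nat) (x y : R) : R :=
  let (p, q) := cpow x y m in ar * p - ai * q.

Definition in_disk (x y : R) : Prop := x * x + y * y < 1.

Definition partial_x (f fx : R -> R -> R) : Prop :=
  forall x y, in_disk x y -> derivable_pt_lim (fun t => f t y) x (fx x y).
Definition partial_y (f fy : R -> R -> R) : Prop :=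
  forall x y, in_disk x y -> derivable_pt_lim (fun t => f x t) y (fy x y).

Definition cont_disk (f : R -> R -> R) : Prop :=
  forall x y, in_disk x y -> forall eps, 0 < eps -> exists delta, 0 < delta /\
    forall x' y', (x' - x) * (x' - x) + (y' - y) * (y' - y) < delta * delta ->
      Rabs (f x' y' - f x y) < eps.

(* u belongs to the Bloch-type space B_mu: u is harmonic on the disk
   (C^2 with vanishing Laplacian) and
   sup_{z in D} ( |u(0)| + mu(|z|) |grad u(z)| ) < infinity. *)
Definition in_Bloch_mu (mu : R -> R) (u : R -> R -> R) : Prop :=
  exists ux uy uxx uxy uyx uyy : R -> R -> R,
    partial_x u ux /\ partial_y u uy /\
    partial_x ux uxx /\ partial_y ux uxy /\
    partial_x uy uyx /\ partial_y uy uyy /\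
    cont_disk u /\ cont_disk ux /\ cont_disk uy /\
    cont_disk uxx /\ cont_disk uxy /\ cont_disk uyx /\ cont_disk uyy /\
    (forall x y, in_disk x y -> uxx x y + uyy x y = 0) /\
    exists M, forall x y, in_disk x y ->
      Rabs (u 0 0) + mu (sqrt (x * x + y * y)) *
        sqrt (ux x y * ux x y + uy x y * uy x y) <= M.

(* Main.v *)
Require Import Defs.
From Stdlib Require Import Reals Lra Lia Psatz ClassicalEpsilon ZArith.
Open Scope R_scope.

Lemma Rabs_le_inv a b : Rabs a <= b -> - b <= a <= b.
Proof. unfold Rabs; destruct (Rcase_abs a); intros; lra. Qed.

Definition summable (f : nat -> R) := exists l, infinite_sum f l.
Definition Sig (f : nat -> R) : R := epsilon (inhabits 0) (fun l => infinite_sum f l).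

Lemma Sig_spec f : summable f -> infinite_sum f (Sig f).
Proof. intros H. unfold Sig. apply epsilon_spec. exact H. Qed.

Lemma Sig_eq f l : infinite_sum f l -> Sig f = l.
Proof. intros H. apply (UL_sequence (sum_f_R0 f)). apply Sig_spec. exists l; exact H. exact H. Qed.

Lemma sum_nonneg f N : (forall k, 0 <= f k) -> 0 <= sum_f_R0 f N.
Proof. intros H; induction N; simpl; [apply H|]. specialize (H (S N)); lra. Qed.

Lemma summable_bounded f M : (forall k, 0 <= f k) -> (forall N, sum_f_R0 f N <= M) -> summable f.
Proof.
  intros H0 HM. destruct (growing_cv (sum_f_R0 f)) as [l Hl].
  - intro n. simpl. specialize (H0 (S n)); lra.
  - exists M. intros x [i ->]. apply HM.
  - exists l; exact Hl.
Qed.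

Lemma partial_le_lim f l N : (forall k, 0 <= f k) -> infinite_sum f l -> sum_f_R0 f N <= l.
Proof.
  intros H0 Hl. apply (growing_ineq (sum_f_R0 f)); auto.
  intro n. simpl. specialize (H0 (S n)); lra.
Qed.

Lemma summable_le f g : (forall k, 0 <= f k <= g k) -> summable g -> summable f.
Proof.
  intros H [l Hl]. apply summable_bounded with l.
  - intro k; apply H.
  - intro N. apply Rle_trans with (sum_f_R0 g N).
    + apply sum_Rle. intros; apply H.
    + apply partial_le_lim; auto. intro k; destruct (H k); lra.
Qed.

Lemma inf_sum_plus f g lf lg : infinite_sum f lf -> infinite_sum g lg ->
  infinite_sum (fun k => f k + g k) (lf + lg).
Proof.
  intros Hf Hg. intros eps Heps.
  destruct (CV_plus _ _ _ _ Hf Hg eps Heps) as [N HN]. exists N. intros n Hn.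
  rewrite sum_plus. apply HN; auto.
Qed.

Lemma inf_sum_scal f c lf : infinite_sum f lf -> infinite_sum (fun k => c * f k) (c * lf).
Proof.
  intros Hf. assert (Hc : Un_cv (fun _ => c) c).
  { intros eps He; exists 0%nat; intros; unfold Rdist; rewrite Rminus_diag, Rabs_R0; lra. }
  intros eps Heps. destruct (CV_mult _ _ _ _ Hc Hf eps Heps) as [N HN]. exists N. intros n Hn.
  replace (sum_f_R0 (fun k => c * f k) n) with (c * sum_f_R0 f n). apply HN; auto.
  rewrite scal_sum. apply sum_eq. intros; ring.
Qed.

Lemma inf_sum_ext f g l : (forall k, f k = g k) -> infinite_sum f l -> infinite_sum g l.
Proof.
  intros He Hf eps Heps. destruct (Hf eps Heps) as [N HN]. exists N; intros n Hn.
  rewrite <- (sum_eq f g n). apply HN; auto. intros; apply He.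
Qed.

Lemma inf_sum_minus f g lf lg : infinite_sum f lf -> infinite_sum g lg ->
  infinite_sum (fun k => f k - g k) (lf - lg).
Proof.
  intros Hf Hg. replace (lf - lg) with (lf + (-1) * lg) by ring.
  apply inf_sum_ext with (fun k => f k + (-1) * g k). intros; ring.
  apply inf_sum_plus; auto. apply inf_sum_scal; auto.
Qed.

Lemma summable_abs f g : (forall k, Rabs (f k) <= g k) -> summable g -> summable f.
Proof.
  intros H Hg. assert (H2 : summable (fun k => f k + g k)).
  { apply summable_le with (fun k => 2 * g k).
    - intro k; specialize (H k). split; apply Rabs_le_inv in H; lra.
    - destruct Hg as [l Hl]. exists (2 * l). apply inf_sum_scal; auto. }
  destruct H2 as [l1 H1]; destruct Hg as [l2 H2].
  exists (l1 - l2). apply inf_sum_ext with (fun k => (f k + g k) - g k). intros; ring.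
  apply inf_sum_minus; auto.
Qed.

Lemma Sig_le f g : (forall k, f k <= g k) -> summable f -> summable g -> Sig f <= Sig g.
Proof.
  intros H Hf Hg. apply Rle_cv_lim with (Un := sum_f_R0 f) (Vn := sum_f_R0 g).
  - intro n; apply sum_Rle; intros; apply H.
  - apply Sig_spec; auto.
  - apply Sig_spec; auto.
Qed.

Lemma Sig_plus f g : summable f -> summable g -> Sig (fun k => f k + g k) = Sig f + Sig g.
Proof. intros Hf Hg. apply Sig_eq. apply inf_sum_plus; apply Sig_spec; auto. Qed.

Lemma Sig_minus f g : summable f -> summable g -> Sig (fun k => f k - g k) = Sig f - Sig g.
Proof. intros Hf Hg. apply Sig_eq. apply inf_sum_minus; apply Sig_spec; auto. Qed.

Lemma Sig_scal f c : summable f -> Sig (fun k => c * f k) = c * Sig f.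
Proof. intros Hf. apply Sig_eq. apply inf_sum_scal; apply Sig_spec; auto. Qed.

Lemma summable_plus f g : summable f -> summable g -> summable (fun k => f k + g k).
Proof. intros Hf Hg. exists (Sig f + Sig g). apply inf_sum_plus; apply Sig_spec; auto. Qed.
Lemma summable_minus f g : summable f -> summable g -> summable (fun k => f k - g k).
Proof. intros Hf Hg. exists (Sig f - Sig g). apply inf_sum_minus; apply Sig_spec; auto. Qed.
Lemma summable_scal f c : summable f -> summable (fun k => c * f k).
Proof. intros Hf. exists (c * Sig f). apply inf_sum_scal; apply Sig_spec; auto. Qed.
Lemma summable_ext f g : (forall k, f k = g k) -> summable f -> summable g.
Proof. intros H [l Hl]. exists l. eapply inf_sum_ext; eauto. Qed.
Lemma Sig_ext f g : (forall k, f k = g k) -> Sig f = Sig g.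
Proof. intros H. assert (f = g) as -> by (apply FunctionalExtensionality.functional_extensionality; auto). reflexivity. Qed.

Lemma Sig_abs_le f g : (forall k, Rabs (f k) <= g k) -> summable g -> Rabs (Sig f) <= Sig g.
Proof.
  intros H Hg. assert (Hf : summable f) by (eapply summable_abs; eauto).
  apply Rabs_le. split.
  - replace (- Sig g) with (Sig (fun k => (-1) * g k)).
    apply Sig_le; auto. intro k; specialize (H k); apply Rabs_le_inv in H; lra.
    apply summable_scal; auto. rewrite Sig_scal; auto; ring.
  - apply Sig_le; auto. intro k; specialize (H k); apply Rabs_le_inv in H; lra.
Qed.

Lemma Sig_nonneg_bound f M : (forall k, 0 <= f k) -> (forall N, sum_f_R0 f N <= M) -> Sig f <= M.
Proof.
  intros H0 HM. assert (Hs : summable f) by (eapply summable_bounded; eauto).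
  apply Rle_cv_lim with (Un := sum_f_R0 f) (Vn := fun _ => M); auto. apply Sig_spec; auto.
  intros eps He; exists 0%nat; intros; unfold Rdist; rewrite Rminus_diag, Rabs_R0; lra.
Qed.
Definition cmul (a b : R * R) : R * R :=
  (fst a * fst b - snd a * snd b, fst a * snd b + snd a * fst b).
Definition cadd (a b : R * R) : R * R := (fst a + fst b, snd a + snd b).
Definition csub (a b : R * R) : R * R := (fst a - fst b, snd a - snd b).
Definition csc (t : R) (a : R * R) : R * R := (t * fst a, t * snd a).
Definition cn2 (a : R * R) : R := fst a * fst a + snd a * snd a.
Definition cn (a : R * R) : R := sqrt (cn2 a).

Lemma cn2_nonneg a : 0 <= cn2 a.
Proof. unfold cn2; nra. Qed.
Lemma cn_nonneg a : 0 <= cn a.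
Proof. apply sqrt_pos. Qed.
Lemma cn_sq a : cn a * cn a = cn2 a.
Proof. apply sqrt_sqrt, cn2_nonneg. Qed.

Lemma cn_mul a b : cn (cmul a b) = cn a * cn b.
Proof.
  unfold cn. rewrite <- sqrt_mult by apply cn2_nonneg. f_equal.
  unfold cn2, cmul; simpl; ring.
Qed.

Lemma cn_sc t a : cn (csc t a) = Rabs t * cn a.
Proof.
  unfold cn. rewrite <- sqrt_Rsqr_abs. rewrite <- sqrt_mult by (apply Rle_0_sqr || apply cn2_nonneg).
  f_equal. unfold cn2, csc, Rsqr; simpl; ring.
Qed.

Lemma le_of_sq a b : 0 <= b -> a * a <= b * b -> a <= b.
Proof. intros; nra. Qed.

Lemma cn_add a b : cn (cadd a b) <= cn a + cn b.
Proof.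
  apply le_of_sq. pose proof (cn_nonneg a); pose proof (cn_nonneg b); lra.
  rewrite cn_sq. replace ((cn a + cn b) * (cn a + cn b)) with (cn a * cn a + cn b * cn b + 2 * (cn a * cn b)) by ring.
  rewrite !cn_sq.
  assert (fst a * fst b + snd a * snd b <= cn a * cn b).
  { destruct (Rle_dec (fst a * fst b + snd a * snd b) 0). pose proof (cn_nonneg a); pose proof (cn_nonneg b); nra.
    apply le_of_sq. pose proof (cn_nonneg a); pose proof (cn_nonneg b); nra.
    replace (cn a * cn b * (cn a * cn b)) with ((cn a * cn a) * (cn b * cn b)) by ring. rewrite !cn_sq.
    pose proof (Rle_0_sqr (fst a * snd b - snd a * fst b)); unfold Rsqr in *; unfold cn2. nra. }
  unfold cn2, cadd in *; simpl in *. nra.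
Qed.

Lemma fst_le_cn a : Rabs (fst a) <= cn a.
Proof.
  apply Rsqr_incr_0_var. 2: apply cn_nonneg. rewrite <- Rsqr_abs. unfold Rsqr. rewrite cn_sq. unfold cn2. nra.
Qed.

Lemma cpowS x y m : cpow x y (S m) = cmul (x, y) (cpow x y m).
Proof. simpl. destruct (cpow x y m). reflexivity. Qed.

Lemma cn_pow x y m : cn (cpow x y m) = cn (x, y) ^ m.
Proof.
  induction m. simpl. unfold cn, cn2; simpl. replace (1*1+0*0) with 1 by ring. apply sqrt_1.
  rewrite cpowS, cn_mul, IHm. simpl; ring.
Qed.

Lemma re_term_eq ar ai m x y : re_term ar ai m x y = fst (cmul (ar, ai) (cpow x y m)).
Proof. unfold re_term. destruct (cpow x y m). reflexivity. Qed.

Lemma pow_diff x y x' y' rho m : cn (x, y) <= rho -> cn (x', y') <= rho ->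
  cn (csub (cpow x' y' m) (cpow x y m)) <= INR m * rho ^ (pred m) * cn (csub (x', y') (x, y)).
Proof.
  intros Hz Hw. assert (Hr : 0 <= rho) by (pose proof (cn_nonneg (x,y)); lra).
  induction m.
  - simpl. unfold cn, cn2, csub; simpl. replace ((1-1)*(1-1)+(0-0)*(0-0)) with 0 by ring. rewrite sqrt_0. lra.
  - assert (E : csub (cpow x' y' (S m)) (cpow x y (S m)) =
      cadd (cmul (x', y') (csub (cpow x' y' m) (cpow x y m))) (cmul (csub (x', y') (x, y)) (cpow x y m))).
    { rewrite !cpowS. destruct (cpow x' y' m), (cpow x y m). unfold cadd, cmul, csub; simpl. f_equal; ring. }
    rewrite E. eapply Rle_trans. apply cn_add. rewrite !cn_mul, cn_pow.
    set (H := cn (csub (x', y') (x, y))). assert (0 <= H) by apply cn_nonneg.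
    assert (0 <= cn (x,y) ^ m) by (apply pow_le, cn_nonneg).
    assert (cn (x,y) ^ m <= rho ^ m) by (apply pow_incr; split; [apply cn_nonneg| auto]).
    assert (INR m * rho ^ pred m * rho = INR m * rho ^ m).
    { destruct m. simpl; ring. simpl; ring. }
    rewrite S_INR. simpl pred.
    apply Rle_trans with (rho * (INR m * rho ^ pred m * H) + rho ^ m * H).
    + apply Rplus_le_compat. apply Rmult_le_compat; auto. apply cn_nonneg. apply cn_nonneg.
      rewrite (Rmult_comm H). apply Rmult_le_compat_r; auto.
    + assert (0 <= INR m) by apply pos_INR. nra.
Qed.

Definition taylor_rem (x y x' y' : R) (m : nat) : R * R :=
  csub (csub (cpow x' y' m) (cpow x y m))
       (csc (INR m) (cmul (csub (x', y') (x, y)) (cpow x y (pred m)))).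

Lemma pow_taylor x y x' y' rho m : cn (x, y) <= rho -> cn (x', y') <= rho -> rho <= 1 ->
  cn (taylor_rem x y x' y' m) <= INR m ^ 2 * rho ^ (m - 2) * cn (csub (x', y') (x, y)) ^ 2.
Proof.
  intros Hz Hw Hr1. assert (Hr : 0 <= rho) by (pose proof (cn_nonneg (x,y)); lra).
  set (H := cn (csub (x', y') (x, y))). assert (0 <= H) by apply cn_nonneg.
  induction m.
  - unfold taylor_rem. simpl. unfold cn, cn2, csub, csc; simpl.
    match goal with |- sqrt ?a <= _ => replace a with 0 by ring end. rewrite sqrt_0. lra.
  - assert (E : taylor_rem x y x' y' (S m) = cadd (cmul (x', y') (taylor_rem x y x' y' m))
        (csc (INR m) (cmul (cmul (csub (x', y') (x, y)) (csub (x', y') (x, y))) (cpow x y (pred m))))).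
    { unfold taylor_rem. destruct m.
      - simpl. unfold cadd, cmul, csub, csc; simpl. f_equal; ring.
      - simpl pred. rewrite (cpowS x' y' (S m)), (cpowS x y (S m)), (cpowS x' y' m), (cpowS x y m).
        rewrite !S_INR. destruct (cpow x' y' m), (cpow x y m). unfold cadd, cmul, csub, csc; simpl. f_equal; ring. }
    rewrite E. eapply Rle_trans. apply cn_add. rewrite cn_mul, cn_sc, !cn_mul, cn_pow.
    rewrite Rabs_right by (apply Rle_ge, pos_INR). fold H.
    assert (0 <= cn (x,y) ^ pred m) by (apply pow_le, cn_nonneg).
    assert (cn (x,y) ^ pred m <= rho ^ pred m) by (apply pow_incr; split; [apply cn_nonneg| auto]).
    assert (0 <= cn (taylor_rem x y x' y' m)) by apply cn_nonneg.
    assert (0 <= INR m) by apply pos_INR.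
    assert (K : INR m ^ 2 * (rho * rho ^ (m - 2)) <= INR m ^ 2 * rho ^ pred m).
    { destruct m. simpl; lra. destruct m. simpl. lra.
      replace (S (S m) - 2)%nat with m by lia. simpl pred. simpl. lra. }
    replace (S m - 2)%nat with (pred m) by lia. rewrite S_INR.
    assert (0 <= rho ^ pred m) by (apply pow_le; auto).
    apply Rle_trans with (rho * (INR m ^ 2 * rho ^ (m - 2) * H ^ 2) + INR m * (H * H * rho ^ pred m)).
    + apply Rplus_le_compat. apply Rmult_le_compat; auto. apply cn_nonneg.
      apply Rmult_le_compat_l; auto. apply Rmult_le_compat_l; auto. nra.
    + assert (HH5 : 0 <= H ^ 2) by nra. pose proof (Rmult_le_compat_r _ _ _ HH5 K).
      assert (0 <= rho ^ pred m * H ^ 2) by nra. nra.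
Qed.

Definition Good (cr ci : nat -> R) (e : nat -> nat) : Prop :=
  forall rho, 1/2 <= rho < 1 -> forall j : nat,
    summable (fun k => cn (cr k, ci k) * INR (e k) ^ j * rho ^ (e k)).

Definition F (cr ci : nat -> R) (e : nat -> nat) (x y : R) : R :=
  Sig (fun k => re_term (cr k) (ci k) (e k) x y).

Definition dxr (cr : nat -> R) (e : nat -> nat) k := INR (e k) * cr k.
Definition dyr (ci : nat -> R) (e : nat -> nat) k := - (INR (e k) * ci k).
Definition de (e : nat -> nat) k := pred (e k).

Lemma cn_dx t a b : cn (t * a, t * b) = Rabs t * cn (a, b).
Proof. apply (cn_sc t (a, b)). Qed.

Lemma cn_dy t a b : cn (- (t * b), t * a) = Rabs t * cn (a, b).
Proof. rewrite <- (cn_sc t (a, b)). unfold cn, cn2, csc; simpl. f_equal; ring. Qed.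

Lemma pow_pred_le rho m : 1/2 <= rho <= 1 -> rho ^ pred m <= 2 * rho ^ m.
Proof.
  intros H. destruct m; simpl. lra. assert (0 <= rho ^ m) by (apply pow_le; lra). nra.
Qed.

Lemma good_deriv_gen cr ci e (cr' ci' : nat -> R) :
  (forall k, cn (cr' k, ci' k) = INR (e k) * cn (cr k, ci k)) ->
  Good cr ci e -> Good cr' ci' (de e).
Proof.
  intros Hc HG rho Hr j.
  apply summable_le with (fun k => 2 * (cn (cr k, ci k) * INR (e k) ^ (S j) * rho ^ (e k))).
  - intro k. rewrite Hc. unfold de.
    assert (0 <= cn (cr k, ci k)) by apply cn_nonneg.
    assert (0 <= INR (e k)) by apply pos_INR.
    assert (0 <= INR (pred (e k))) by apply pos_INR.
    assert (INR (pred (e k)) <= INR (e k)) by (apply le_INR; lia).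
    assert (0 <= INR (pred (e k)) ^ j) by (apply pow_le; auto).
    assert (INR (pred (e k)) ^ j <= INR (e k) ^ j) by (apply pow_incr; auto).
    assert (0 <= rho ^ pred (e k)) by (apply pow_le; lra).
    pose proof (pow_pred_le rho (e k) ltac:(lra)).
    assert (0 <= INR (e k) ^ j) by (apply pow_le; auto).
    split. apply Rmult_le_pos; auto. apply Rmult_le_pos; auto. apply Rmult_le_pos; auto.
    simpl. 
    apply Rle_trans with (INR (e k) * cn (cr k, ci k) * INR (e k) ^ j * (2 * rho ^ e k)).
    apply Rmult_le_compat; auto. apply Rmult_le_pos; auto. apply Rmult_le_pos; auto.
    apply Rmult_le_compat_l; auto. apply Rmult_le_pos; auto. lra.
  - apply summable_scal. apply HG; auto.
Qed.

Lemma good_dx cr ci e : Good cr ci e -> Good (dxr cr e) (dxr ci e) (de e).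
Proof.
  apply good_deriv_gen. intro k. unfold dxr. rewrite cn_dx. rewrite Rabs_right; auto. apply Rle_ge, pos_INR.
Qed.

Lemma good_dy cr ci e : Good cr ci e -> Good (dyr ci e) (dxr cr e) (de e).
Proof.
  apply good_deriv_gen. intro k. unfold dxr, dyr. rewrite cn_dy. rewrite Rabs_right; auto. apply Rle_ge, pos_INR.
Qed.

Lemma term_bound cr ci m x y rho : cn (x, y) <= rho ->
  Rabs (re_term cr ci m x y) <= cn (cr, ci) * rho ^ m.
Proof.
  intros H. rewrite re_term_eq. eapply Rle_trans. apply fst_le_cn.
  rewrite cn_mul, cn_pow. apply Rmult_le_compat_l. apply cn_nonneg.
  apply pow_incr. split; auto. apply cn_nonneg.
Qed.

Lemma good_summable cr ci e x y rho : Good cr ci e -> 1/2 <= rho < 1 -> cn (x, y) <= rho ->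
  summable (fun k => re_term (cr k) (ci k) (e k) x y).
Proof.
  intros HG Hr H. apply summable_abs with (fun k => cn (cr k, ci k) * INR (e k) ^ 0 * rho ^ (e k)).
  - intro k. simpl. rewrite Rmult_1_r. apply term_bound; auto.
  - apply HG; auto.
Qed.

Definition rad (x y : R) := Rmax (1/2) ((1 + cn (x, y)) / 2).

Lemma rad_prop x y : cn (x, y) < 1 -> 1/2 <= rad x y < 1 /\ cn (x, y) < rad x y.
Proof.
  intros H. unfold rad. pose proof (cn_nonneg (x,y)).
  pose proof (Rmax_l (1/2) ((1 + cn (x, y)) / 2)). pose proof (Rmax_r (1/2) ((1 + cn (x, y)) / 2)).
  split; [split|]; try lra. apply Rmax_lub_lt; lra.
Qed.

Lemma taylor_term cr ci m x y x' y' :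
  re_term cr ci m x' y' - re_term cr ci m x y
  - ((x' - x) * re_term (INR m * cr) (INR m * ci) (pred m) x y
     + (y' - y) * re_term (- (INR m * ci)) (INR m * cr) (pred m) x y)
  = fst (cmul (cr, ci) (taylor_rem x y x' y' m)).
Proof.
  rewrite !re_term_eq. unfold taylor_rem. destruct (cpow x' y' m), (cpow x y m), (cpow x y (pred m)).
  unfold cmul, csub, csc; simpl. ring.
Qed.

Lemma cn_diff_bound x y x' y' : cn (x', y') <= cn (x, y) + cn (csub (x', y') (x, y)).
Proof.
  replace (x', y') with (cadd (x, y) (csub (x', y') (x, y))) at 1.
  apply cn_add. unfold cadd, csub; simpl; f_equal; ring.
Qed.

Lemma F_taylor cr ci e x y x' y' rho : Good cr ci e -> 1/2 <= rho < 1 ->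
  cn (x, y) <= rho -> cn (x', y') <= rho ->
  Rabs (F cr ci e x' y' - F cr ci e x y
        - ((x' - x) * F (dxr cr e) (dxr ci e) (de e) x y + (y' - y) * F (dyr ci e) (dxr cr e) (de e) x y))
  <= 4 * Sig (fun k => cn (cr k, ci k) * INR (e k) ^ 2 * rho ^ (e k)) * cn (csub (x', y') (x, y)) ^ 2.
Proof.
  intros HG Hr Hz Hw. unfold F.
  assert (S1 := good_summable _ _ _ _ _ _ HG Hr Hw).
  assert (S2 := good_summable _ _ _ _ _ _ HG Hr Hz).
  assert (S3 := good_summable _ _ _ _ _ _ (good_dx _ _ _ HG) Hr Hz).
  assert (S4 := good_summable _ _ _ _ _ _ (good_dy _ _ _ HG) Hr Hz).
  set (H := cn (csub (x', y') (x, y))). assert (0 <= H) by apply cn_nonneg.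
  match goal with |- Rabs (Sig ?T1 - Sig ?T2 - ((x' - x) * Sig ?T3 + (y' - y) * Sig ?T4)) <= _ =>
    assert (E : Sig (fun k => T1 k - T2 k - ((x' - x) * T3 k + (y' - y) * T4 k)) =
       Sig T1 - Sig T2 - ((x' - x) * Sig T3 + (y' - y) * Sig T4)) end.
  { apply Sig_eq. apply inf_sum_minus. apply inf_sum_minus; apply Sig_spec; auto.
    apply inf_sum_plus; apply inf_sum_scal; apply Sig_spec; auto. }
  rewrite <- E.
  apply Rle_trans with (Sig (fun k => (4 * H ^ 2) * (cn (cr k, ci k) * INR (e k) ^ 2 * rho ^ (e k)))).
  2: { right. rewrite Sig_scal. unfold H; ring. apply HG; auto. }
  apply Sig_abs_le. 2: apply summable_scal; apply HG; auto.
  intro k. unfold dxr, dyr, de. rewrite taylor_term.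
  eapply Rle_trans. apply fst_le_cn. rewrite cn_mul.
  eapply Rle_trans. apply Rmult_le_compat_l. apply cn_nonneg. apply (pow_taylor x y x' y' rho); auto; lra.
  assert (rho ^ (e k - 2) <= 4 * rho ^ e k).
  { destruct Hr. destruct (e k) as [|[|m]]; simpl. lra. lra. replace (m - 0)%nat with m by lia.
    assert (0 <= rho ^ m) by (apply pow_le; lra). assert (1/4 <= rho*rho) by nra. replace (rho * (rho * rho ^ m)) with ((rho*rho) * rho ^ m) by ring. nra. }
  assert (0 <= rho ^ (e k - 2)) by (apply pow_le; lra).
  assert (0 <= cn (cr k, ci k)) by apply cn_nonneg.
  assert (0 <= INR (e k) ^ 2) by (apply pow_le, pos_INR).
  fold H. assert (0 <= H ^ 2) by nra.
  apply Rle_trans with (cn (cr k, ci k) * (INR (e k) ^ 2 * (4 * rho ^ e k) * H ^ 2)).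
  apply Rmult_le_compat_l; auto. apply Rmult_le_compat_r; auto. apply Rmult_le_compat_l; auto.
  right; ring.
Qed.

Lemma lip_term cr ci m x y x' y' :
  re_term cr ci m x' y' - re_term cr ci m x y = fst (cmul (cr, ci) (csub (cpow x' y' m) (cpow x y m))).
Proof. rewrite !re_term_eq. destruct (cpow x' y' m), (cpow x y m). unfold cmul, csub; simpl; ring. Qed.

Lemma F_lip cr ci e x y x' y' rho : Good cr ci e -> 1/2 <= rho < 1 ->
  cn (x, y) <= rho -> cn (x', y') <= rho ->
  Rabs (F cr ci e x' y' - F cr ci e x y)
  <= 2 * Sig (fun k => cn (cr k, ci k) * INR (e k) ^ 1 * rho ^ (e k)) * cn (csub (x', y') (x, y)).
Proof.
  intros HG Hr Hz Hw. unfold F.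
  assert (S1 := good_summable _ _ _ _ _ _ HG Hr Hw).
  assert (S2 := good_summable _ _ _ _ _ _ HG Hr Hz).
  rewrite <- Sig_minus; auto.
  set (H := cn (csub (x', y') (x, y))). assert (0 <= H) by apply cn_nonneg.
  apply Rle_trans with (Sig (fun k => (2 * H) * (cn (cr k, ci k) * INR (e k) ^ 1 * rho ^ (e k)))).
  2: { right. rewrite Sig_scal. unfold H; ring. apply HG; auto. }
  apply Sig_abs_le. 2: apply summable_scal; apply HG; auto.
  intro k. rewrite lip_term.
  eapply Rle_trans. apply fst_le_cn. rewrite cn_mul.
  eapply Rle_trans. apply Rmult_le_compat_l. apply cn_nonneg. apply (pow_diff x y x' y' rho); auto.
  pose proof (pow_pred_le rho (e k) ltac:(lra)).
  assert (0 <= rho ^ pred (e k)) by (apply pow_le; lra).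
  assert (0 <= cn (cr k, ci k)) by apply cn_nonneg.
  assert (0 <= INR (e k)) by (apply pos_INR).
  fold H. simpl. rewrite Rmult_1_r.
  apply Rle_trans with (cn (cr k, ci k) * (INR (e k) * (2 * rho ^ e k) * H)).
  apply Rmult_le_compat_l; auto. apply Rmult_le_compat_r; auto. apply Rmult_le_compat_l; auto.
  right; ring.
Qed.

Lemma cn_x0 a : cn (a, 0) = Rabs a.
Proof. unfold cn, cn2; simpl. rewrite <- sqrt_Rsqr_abs. unfold Rsqr. f_equal. ring. Qed.
Lemma cn_0y a : cn (0, a) = Rabs a.
Proof. unfold cn, cn2; simpl. rewrite <- sqrt_Rsqr_abs. unfold Rsqr. f_equal. ring. Qed.

Lemma sum_zero n : sum_f_R0 (fun _ => 0) n = 0.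
Proof. induction n; simpl; lra. Qed.
Lemma inf_sum_zero : infinite_sum (fun _ => 0) 0.
Proof. intros eps He; exists 0%nat; intros; rewrite sum_zero; unfold Rdist; rewrite Rminus_diag, Rabs_R0; lra. Qed.

Lemma Sig_nonneg f : (forall k, 0 <= f k) -> summable f -> 0 <= Sig f.
Proof.
  intros H Hs. rewrite <- (Sig_eq _ _ inf_sum_zero). apply Sig_le; auto. exists 0; apply inf_sum_zero.
Qed.

Lemma disk_cn x y : in_disk x y -> cn (x, y) < 1.
Proof.
  unfold in_disk, cn, cn2; simpl. intros H. rewrite <- sqrt_1. apply sqrt_lt_1; nra.
Qed.

Lemma sqrt_lt_of a d : 0 < d -> a < d * d -> sqrt a < d.
Proof.
  intros Hd Ha. destruct (Rle_dec 0 a).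
  - pose proof (sqrt_sqrt a r). pose proof (sqrt_pos a). nra.
  - rewrite sqrt_neg_0 by lra. lra.
Qed.

Lemma good_sig_nonneg cr ci e rho j : Good cr ci e -> 1/2 <= rho < 1 ->
  0 <= Sig (fun k => cn (cr k, ci k) * INR (e k) ^ j * rho ^ (e k)).
Proof.
  intros HG Hr. apply Sig_nonneg. 2: apply HG; auto. intro k.
  apply Rmult_le_pos. apply Rmult_le_pos. apply cn_nonneg. apply pow_le, pos_INR. apply pow_le; lra.
Qed.

Lemma F_partial_x cr ci e : Good cr ci e ->
  partial_x (F cr ci e) (F (dxr cr e) (dxr ci e) (de e)).
Proof.
  intros HG x y Hd. apply disk_cn in Hd. destruct (rad_prop x y Hd) as [Hr Hlt].
  set (rho := rad x y) in *.
  set (S2 := Sig (fun k => cn (cr k, ci k) * INR (e k) ^ 2 * rho ^ (e k))).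
  assert (HS : 0 <= S2) by (apply good_sig_nonneg; auto).
  intros eps Heps.
  assert (Hdel : 0 < Rmin (rho - cn (x, y)) (eps / (4 * S2 + 1))).
  { apply Rmin_glb_lt. lra. apply Rdiv_lt_0_compat; lra. }
  exists (mkposreal _ Hdel). intros h Hh0 Hh. simpl in Hh.
  pose proof (Rmin_l (rho - cn (x, y)) (eps / (4 * S2 + 1))).
  pose proof (Rmin_r (rho - cn (x, y)) (eps / (4 * S2 + 1))).
  assert (Hc : cn (csub (x + h, y) (x, y)) = Rabs h).
  { unfold csub; simpl. replace (x + h - x) with h by ring. replace (y - y) with 0 by ring. apply cn_x0. }
  assert (Hw : cn (x + h, y) <= rho).
  { pose proof (cn_diff_bound x y (x + h) y). lra. }
  pose proof (F_taylor cr ci e x y (x + h) y rho HG Hr (Rlt_le _ _ Hlt) Hw) as T.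
  fold S2 in T. rewrite Hc in T. replace (x + h - x) with h in T by ring. replace (y - y) with 0 in T by ring.
  rewrite Rmult_0_l, Rplus_0_r in T.
  set (D := F (dxr cr e) (dxr ci e) (de e) x y) in *.
  replace ((F cr ci e (x + h) y - F cr ci e x y) / h - D) with ((F cr ci e (x + h) y - F cr ci e x y - h * D) / h)
    by (field; auto).
  unfold Rdiv. rewrite Rabs_mult, Rabs_inv.
  assert (Hah : 0 < Rabs h) by (apply Rabs_pos_lt; auto).
  apply Rle_lt_trans with (4 * S2 * Rabs h ^ 2 * / Rabs h).
  apply Rmult_le_compat_r. left; apply Rinv_0_lt_compat; auto. auto.
  replace (4 * S2 * Rabs h ^ 2 * / Rabs h) with (4 * S2 * Rabs h) by (field; lra).
  apply Rle_lt_trans with (4 * S2 * (eps / (4 * S2 + 1))).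
  apply Rmult_le_compat_l; lra.
  assert (Hq: eps/(4 * S2+1) * (4 * S2+1) = eps) by (field; lra). assert (0 < eps/(4 * S2+1)) by (apply Rdiv_lt_0_compat; lra). nra.
Qed.

Lemma F_partial_y cr ci e : Good cr ci e ->
  partial_y (F cr ci e) (F (dyr ci e) (dxr cr e) (de e)).
Proof.
  intros HG x y Hd. apply disk_cn in Hd. destruct (rad_prop x y Hd) as [Hr Hlt].
  set (rho := rad x y) in *.
  set (S2 := Sig (fun k => cn (cr k, ci k) * INR (e k) ^ 2 * rho ^ (e k))).
  assert (HS : 0 <= S2) by (apply good_sig_nonneg; auto).
  intros eps Heps.
  assert (Hdel : 0 < Rmin (rho - cn (x, y)) (eps / (4 * S2 + 1))).
  { apply Rmin_glb_lt. lra. apply Rdiv_lt_0_compat; lra. }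
  exists (mkposreal _ Hdel). intros h Hh0 Hh. simpl in Hh.
  pose proof (Rmin_l (rho - cn (x, y)) (eps / (4 * S2 + 1))).
  pose proof (Rmin_r (rho - cn (x, y)) (eps / (4 * S2 + 1))).
  assert (Hc : cn (csub (x, y + h) (x, y)) = Rabs h).
  { unfold csub; simpl. replace (y + h - y) with h by ring. replace (x - x) with 0 by ring. apply cn_0y. }
  assert (Hw : cn (x, y + h) <= rho).
  { pose proof (cn_diff_bound x y x (y + h)). lra. }
  pose proof (F_taylor cr ci e x y x (y + h) rho HG Hr (Rlt_le _ _ Hlt) Hw) as T.
  fold S2 in T. rewrite Hc in T. replace (y + h - y) with h in T by ring. replace (x - x) with 0 in T by ring.
  rewrite Rmult_0_l, Rplus_0_l in T.
  set (D := F (dyr ci e) (dxr cr e) (de e) x y) in *.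
  replace ((F cr ci e x (y + h) - F cr ci e x y) / h - D) with ((F cr ci e x (y + h) - F cr ci e x y - h * D) / h)
    by (field; auto).
  unfold Rdiv. rewrite Rabs_mult, Rabs_inv.
  assert (Hah : 0 < Rabs h) by (apply Rabs_pos_lt; auto).
  apply Rle_lt_trans with (4 * S2 * Rabs h ^ 2 * / Rabs h).
  apply Rmult_le_compat_r. left; apply Rinv_0_lt_compat; auto. auto.
  replace (4 * S2 * Rabs h ^ 2 * / Rabs h) with (4 * S2 * Rabs h) by (field; lra).
  apply Rle_lt_trans with (4 * S2 * (eps / (4 * S2 + 1))).
  apply Rmult_le_compat_l; lra.
  assert (Hq: eps/(4 * S2+1) * (4 * S2+1) = eps) by (field; lra). assert (0 < eps/(4 * S2+1)) by (apply Rdiv_lt_0_compat; lra). nra.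
Qed.

Lemma F_cont cr ci e : Good cr ci e -> cont_disk (F cr ci e).
Proof.
  intros HG x y Hd. apply disk_cn in Hd. destruct (rad_prop x y Hd) as [Hr Hlt].
  set (rho := rad x y) in *.
  set (S1 := Sig (fun k => cn (cr k, ci k) * INR (e k) ^ 1 * rho ^ (e k))).
  assert (HS : 0 <= S1) by (apply good_sig_nonneg; auto).
  intros eps Heps.
  assert (Hdel : 0 < Rmin (rho - cn (x, y)) (eps / (2 * S1 + 1))).
  { apply Rmin_glb_lt. lra. apply Rdiv_lt_0_compat; lra. }
  exists (Rmin (rho - cn (x, y)) (eps / (2 * S1 + 1))). split; auto.
  intros x' y' Hxy.
  pose proof (Rmin_l (rho - cn (x, y)) (eps / (2 * S1 + 1))).
  pose proof (Rmin_r (rho - cn (x, y)) (eps / (2 * S1 + 1))).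
  assert (Hc : cn (csub (x', y') (x, y)) < Rmin (rho - cn (x, y)) (eps / (2 * S1 + 1))).
  { apply sqrt_lt_of; auto. }
  assert (Hw : cn (x', y') <= rho).
  { pose proof (cn_diff_bound x y x' y'). lra. }
  pose proof (F_lip cr ci e x y x' y' rho HG Hr (Rlt_le _ _ Hlt) Hw) as T. fold S1 in T.
  eapply Rle_lt_trans. apply T.
  assert (0 <= cn (csub (x', y') (x, y))) by apply cn_nonneg.
  apply Rle_lt_trans with (2 * S1 * (eps / (2 * S1 + 1))).
  apply Rmult_le_compat_l; lra.
  assert (Hq: eps/(2 * S1+1) * (2 * S1+1) = eps) by (field; lra). assert (0 < eps/(2 * S1+1)) by (apply Rdiv_lt_0_compat; lra). nra.
Qed.

Lemma F_harm cr ci e x y : Good cr ci e -> in_disk x y ->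
  F (dxr (dxr cr e) (de e)) (dxr (dxr ci e) (de e)) (de (de e)) x y
  + F (dyr (dxr cr e) (de e)) (dxr (dyr ci e) (de e)) (de (de e)) x y = 0.
Proof.
  intros HG Hd. apply disk_cn in Hd. destruct (rad_prop x y Hd) as [Hr Hlt].
  assert (G2 := good_dx _ _ _ (good_dx _ _ _ HG)).
  assert (G3 := good_dy _ _ _ (good_dy _ _ _ HG)).
  unfold F. rewrite <- Sig_plus.
  - apply Sig_eq. apply inf_sum_ext with (fun k => 0).
    + intro k. unfold dxr, dyr, de. rewrite !re_term_eq. destruct (cpow x y (pred (pred (e k)))).
      unfold cmul; simpl; ring.
    + apply inf_sum_zero.
  - apply (good_summable _ _ _ _ _ _ G2 Hr (Rlt_le _ _ Hlt)).
  - apply (good_summable _ _ _ _ _ _ G3 Hr (Rlt_le _ _ Hlt)).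
Qed.

Lemma exists_nat_gt r : exists m : nat, r < INR m.
Proof.
  destruct (archimed r) as [H1 _]. destruct (Z.le_gt_cases (up r) 0).
  - exists 0%nat. simpl. apply IZR_le in H. lra.
  - exists (Z.to_nat (up r)). rewrite INR_IZR_INZ, Z2Nat.id by lia. lra.
Qed.

Lemma bern_up x m : 1 <= x -> 1 + INR m * (x - 1) <= x ^ m.
Proof.
  intros Hx. induction m. simpl; lra. rewrite S_INR. simpl.
  assert (0 <= INR m) by apply pos_INR.
  assert (0 <= (x-1) * (x^m - (1 + INR m * (x-1)))) by (apply Rmult_le_pos; lra).
  assert (0 <= INR m * ((x-1)*(x-1))) by (apply Rmult_le_pos; nra). nra.
Qed.

Lemma pow_unbounded x r : 1 < x -> exists m : nat, r < x ^ m.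
Proof.
  intros Hx. destruct (exists_nat_gt (r / (x - 1))) as [m Hm]. exists m.
  pose proof (bern_up x m ltac:(lra)).
  assert (r / (x - 1) * (x - 1) = r) by (field; lra).
  assert (0 <= INR m) by apply pos_INR. nra.
Qed.

Lemma inv_range y : 1 <= y -> 0 <= 1 - / y < 1.
Proof.
  intros H. assert (0 < / y) by (apply Rinv_0_lt_compat; lra).
  assert (/ y <= 1) by (rewrite <- Rinv_1; apply Rinv_le_contravar; lra). lra.
Qed.

Lemma inv_mono y z : 1 <= y -> y <= z -> 1 - / y <= 1 - / z.
Proof. intros. assert (/ z <= / y) by (apply Rinv_le_contravar; lra). lra. Qed.

Lemma B_le_1 (mu : R -> R) B
  (mu_pos : forall r, 0 <= r < 1 -> 0 < mu r)
  (mu_decr : forall r s, 0 <= r -> r <= s -> s < 1 -> mu s <= mu r)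
  (mu_doubling : forall d, 0 < d <= 1 -> mu (1 - d / 2) >= B * mu (1 - d)) : B <= 1.
Proof.
  pose proof (mu_doubling 1 ltac:(lra)). replace (1 - 1) with 0 in H by ring.
  pose proof (mu_decr 0 (1 - 1/2) ltac:(lra) ltac:(lra) ltac:(lra)).
  pose proof (mu_pos 0 ltac:(lra)). destruct (Rle_dec B 1); auto.
  assert (B * mu 0 > mu 0) by nra. lra.
Qed.

Lemma dbl_poly (mu : R -> R) B (HB : 0 < B)
  (mu_pos : forall r, 0 <= r < 1 -> 0 < mu r)
  (mu_decr : forall r s, 0 <= r -> r <= s -> s < 1 -> mu s <= mu r)
  (mu_doubling : forall d, 0 < d <= 1 -> mu (1 - d / 2) >= B * mu (1 - d))
  (beta : nat) (Hbeta : 1 <= 2 ^ beta * B) :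
  forall m N y, 1 <= N -> N <= y -> y <= 2 ^ m * N -> B * mu (1 - / N) <= (y / N) ^ beta * mu (1 - / y).
Proof.
  pose proof (B_le_1 mu B mu_pos mu_decr mu_doubling) as HB1.
  induction m; intros N y HN HNy Hy.
  - simpl in Hy. assert (y = N) by lra. subst y.
    replace (N / N) with 1 by (field; lra). rewrite pow1.
    pose proof (mu_pos (1 - / N) (inv_range N HN)). nra.
  - destruct (Rle_dec y (2 * N)).
    + assert (H1 : mu (1 - / y) >= mu (1 - / (2 * N))).
      { apply Rle_ge, mu_decr. apply inv_range; lra. apply inv_mono; lra. apply inv_range; lra. }
      assert (H2 : mu (1 - / (2 * N)) >= B * mu (1 - / N)).
      { replace (1 - / (2 * N)) with (1 - / N / 2) by (field; lra). apply mu_doubling.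
        split. apply Rinv_0_lt_compat; lra. rewrite <- Rinv_1; apply Rinv_le_contravar; lra. }
      assert (H3 : 1 <= (y / N) ^ beta).
      { apply pow_R1_Rle. apply Rmult_le_reg_r with N. lra. unfold Rdiv. rewrite Rmult_assoc, Rinv_l; lra. }
      pose proof (mu_pos (1 - / y) (inv_range y ltac:(lra))). nra.
    + assert (IH := IHm N (y / 2) HN ltac:(lra) ltac:(simpl in Hy; lra)).
      assert (H2 : mu (1 - / y) >= B * mu (1 - / (y / 2))).
      { replace (1 - / y) with (1 - / (y / 2) / 2) by (field; lra). apply mu_doubling.
        split. apply Rinv_0_lt_compat; lra. rewrite <- Rinv_1; apply Rinv_le_contravar; lra. }
      assert (E : (y / N) ^ beta = 2 ^ beta * (y / 2 / N) ^ beta).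
      { rewrite <- Rpow_mult_distr. f_equal. field. lra. }
      rewrite E.
      assert (0 <= (y / 2 / N) ^ beta) by (apply pow_le; apply Rmult_le_pos; [lra| left; apply Rinv_0_lt_compat; lra]).
      pose proof (mu_pos (1 - / (y / 2)) (inv_range (y / 2) ltac:(lra))).
      assert (0 <= 2 ^ beta) by (apply pow_le; lra).
      apply Rle_trans with ((y / 2 / N) ^ beta * mu (1 - / (y / 2))); auto.
      apply Rle_trans with ((y / 2 / N) ^ beta * (2 ^ beta * B * mu (1 - / (y / 2)))).
      apply Rmult_le_compat_l; auto. nra.
      replace (2 ^ beta * (y / 2 / N) ^ beta * mu (1 - / y)) with ((y / 2 / N) ^ beta * (2 ^ beta * mu (1 - / y))) by ring.
      apply Rmult_le_compat_l; auto. rewrite Rmult_assoc. apply Rmult_le_compat_l; auto. lra.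
Qed.

Lemma dbl_poly2 (mu : R -> R) B (HB : 0 < B)
  (mu_pos : forall r, 0 <= r < 1 -> 0 < mu r)
  (mu_decr : forall r s, 0 <= r -> r <= s -> s < 1 -> mu s <= mu r)
  (mu_doubling : forall d, 0 < d <= 1 -> mu (1 - d / 2) >= B * mu (1 - d)) :
  exists beta : nat, forall N y, 1 <= N -> N <= y -> B * mu (1 - / N) <= (y / N) ^ beta * mu (1 - / y).
Proof.
  destruct (pow_unbounded 2 (/ B) ltac:(lra)) as [beta Hb]. exists beta.
  intros N y HN HNy. destruct (pow_unbounded 2 (y / N) ltac:(lra)) as [m Hm].
  apply (dbl_poly mu B HB mu_pos mu_decr mu_doubling beta) with m; auto.
  apply Rmult_le_reg_r with (/ B). apply Rinv_0_lt_compat; auto. rewrite Rmult_assoc, Rinv_r, Rmult_1_l, Rmult_1_r; lra.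
  apply Rmult_le_reg_r with (/ N). apply Rinv_0_lt_compat; lra. rewrite Rmult_assoc, Rinv_r by lra. fold (y / N). lra.
Qed.

Lemma bern_down a p : 0 <= a <= 1 -> 1 - INR p * a <= (1 - a) ^ p.
Proof.
  intros Ha. induction p. simpl; lra. rewrite S_INR. simpl.
  assert (0 <= INR p) by apply pos_INR.
  assert (0 <= (1 - a) * ((1 - a) ^ p - (1 - INR p * a))) by (apply Rmult_le_pos; lra).
  assert (0 <= INR p * (a * a)) by (apply Rmult_le_pos; nra). nra.
Qed.

Lemma pow_le_1 x p : 0 <= x <= 1 -> x ^ p <= 1.
Proof. intros H. rewrite <- (pow1 p). apply pow_incr. lra. Qed.

Lemma onepa_bound a p : 0 <= a -> INR p * a <= 1 -> (1 + a) ^ p * (1 - INR p * a) <= 1.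
Proof.
  intros Ha Hp. destruct p. simpl; lra.
  assert (a <= 1). { rewrite S_INR in Hp. assert (0 <= INR p) by apply pos_INR. nra. }
  pose proof (bern_down a (S p) ltac:(lra)).
  assert (0 <= (1 + a) ^ S p) by (apply pow_le; lra).
  apply Rle_trans with ((1 + a) ^ S p * (1 - a) ^ S p).
  apply Rmult_le_compat_l; auto.
  rewrite <- Rpow_mult_distr. apply pow_le_1. nra.
Qed.

Lemma polygeo p d j : 0 < d <= 1 -> (INR j * d) ^ p * (1 - d) ^ j <= (2 * INR p + 1) ^ p.
Proof.
  intros Hd. assert (HP : 1 <= (2 * INR p + 1) ^ p).
  { apply pow_R1_Rle. pose proof (pos_INR p). lra. }
  induction j.
  - simpl. rewrite Rmult_0_l, Rmult_1_r. destruct p. simpl; lra. rewrite pow_i by lia. lra.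
  - destruct (Rle_dec (INR (S j) * d) (2 * INR p + 1)).
    + assert (0 <= INR (S j) * d) by (apply Rmult_le_pos; [apply pos_INR| lra]).
      assert ((INR (S j) * d) ^ p <= (2 * INR p + 1) ^ p) by (apply pow_incr; lra).
      assert ((1 - d) ^ S j <= 1) by (apply pow_le_1; lra).
      assert (0 <= (1 - d) ^ S j) by (apply pow_le; lra).
      assert (0 <= (INR (S j) * d) ^ p) by (apply pow_le; lra).
      apply Rle_trans with ((2 * INR p + 1) ^ p * 1). apply Rmult_le_compat; auto. lra.
    + rewrite S_INR in *. set (J := INR j) in *.
      assert (HJ : J * d > 2 * INR p) by lra.
      assert (HJ0 : 0 < J). { pose proof (pos_INR p). nra. }
      assert (E1 : (J + 1) * d = J * d * (1 + / J)) by (field; lra).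
      rewrite E1, Rpow_mult_distr. simpl ((1 - d) ^ S j).
      assert (Hp : INR p * / J <= d / 2).
      { apply Rmult_le_reg_r with J. auto. rewrite Rmult_assoc, Rinv_l by lra. lra. }
      assert (0 <= / J) by (left; apply Rinv_0_lt_compat; auto).
      pose proof (onepa_bound (/ J) p ltac:(auto) ltac:(lra)).
      assert (0 <= (1 + / J) ^ p) by (apply pow_le; lra).
      assert (Hk : (1 + / J) ^ p * (1 - d) <= 1).
      { apply Rle_trans with ((1 + / J) ^ p * (1 - INR p * / J)); auto.
        apply Rmult_le_compat_l; auto. pose proof (pos_INR p). nra. }
      assert (0 <= (J * d) ^ p * (1 - d) ^ j).
      { apply Rmult_le_pos; apply pow_le; nra. }
      apply Rle_trans with ((J * d) ^ p * (1 - d) ^ j); auto.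
      replace ((J * d) ^ p * (1 + / J) ^ p * ((1 - d) * (1 - d) ^ j))
        with (((J * d) ^ p * (1 - d) ^ j) * ((1 + / J) ^ p * (1 - d))) by ring.
      rewrite <- (Rmult_1_r ((J * d) ^ p * (1 - d) ^ j)) at 2.
      apply Rmult_le_compat_l; auto.
Qed.

Lemma chain (mu : R -> R) (A y0 lambda q : R)
  (mu_pos : forall r, 0 <= r < 1 -> 0 < mu r)
  (mu_decr : forall r s, 0 <= r -> r <= s -> s < 1 -> mu s <= mu r)
  (Hq : 1 < q) (Hql : q < lambda) (HA : 1 < A) (Hy0 : 1 <= y0)
  (Hgap : forall y x, y0 < y -> q * y < x -> mu (1 - / y) > A * mu (1 - / x)) :
  forall m y X, y0 < y -> lambda ^ m * y <= X -> A ^ m * mu (1 - / X) <= mu (1 - / y).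
Proof.
  induction m; intros y X Hy HX.
  - simpl in *. rewrite Rmult_1_l. apply mu_decr. apply inv_range; lra. apply inv_mono; lra. apply inv_range; lra.
  - assert (IH := IHm (lambda * y) X ltac:(nra) ltac:(simpl in HX; lra)).
    pose proof (Hgap y (lambda * y) Hy ltac:(nra)).
    simpl. assert (0 < A ^ m) by (apply pow_lt; lra). nra.
Qed.

Lemma lac_shift (n : nat -> nat) lambda (Hl : 1 < lambda)
  (n_gap : forall k, INR (n (S k)) >= lambda * INR (n k)) :
  forall j k, lambda ^ j * INR (n k) <= INR (n (k + j)%nat).
Proof.
  induction j; intros k. simpl. rewrite Nat.add_0_r; lra.
  replace (k + S j)%nat with (S (k + j)) by lia. pose proof (n_gap (k + j)%nat). pose proof (IHj k).
  simpl. nra.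
Qed.

Lemma least_nat (P : nat -> Prop) : (forall k, P k \/ ~ P k) -> (exists k, P k) ->
  exists k, P k /\ forall j, (j < k)%nat -> ~ P j.
Proof.
  intros Hd [K HK]. revert HK. revert K. 
  assert (forall K k, (k <= K)%nat -> P k -> exists k, P k /\ forall j, (j < k)%nat -> ~ P j).
  { induction K; intros k Hk HP.
    - exists k. split; auto. intros; lia.
    - destruct (classic (exists k', (k' <= K)%nat /\ P k')) as [[k' [H1 H2]]|Hn].
      + apply (IHK k'); auto.
      + exists k. split; auto. intros j Hj HPj. apply Hn. exists j. split; auto. lia. }
  intros K HK. apply (H K K); auto.
Qed.

Lemma psum_mono f M M' : (forall k, 0 <= f k) -> (M <= M')%nat -> sum_f_R0 f M <= sum_f_R0 f M'.
Proof.
  intros H Hm. induction Hm. lra. simpl. specialize (H (S m)). lra.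
Qed.

Lemma geo_sum b M : 0 <= b < 1 -> sum_f_R0 (fun i => b ^ i) M <= 1 / (1 - b).
Proof.
  intros Hb. pose proof (GP_finite b M).
  assert (0 <= b ^ (M + 1)) by (apply pow_le; lra).
  apply Rmult_le_reg_r with (1 - b). lra. unfold Rdiv. rewrite Rmult_assoc, Rinv_l by lra. nra.
Qed.

Lemma rev_geo a m : 0 <= a < 1 -> sum_f_R0 (fun k => a ^ (m - k)) m <= 1 / (1 - a).
Proof.
  intros Ha. induction m.
  - simpl. apply Rmult_le_reg_r with (1 - a). lra. unfold Rdiv. rewrite Rmult_assoc, Rinv_l by lra. lra.
  - rewrite tech5. replace (S m - S m)%nat with 0%nat by lia.
    rewrite (sum_eq _ (fun k => a ^ (m - k) * a)).
    rewrite <- scal_sum. simpl pow.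
    assert (0 <= sum_f_R0 (fun k => a ^ (m - k)) m) by (apply sum_nonneg; intros; apply pow_le; lra).
    assert (E : 1 / (1 - a) = a * (1 / (1 - a)) + 1) by (field; lra). rewrite E.
    assert (a * sum_f_R0 (fun k => a ^ (m - k)) m <= a * (1 / (1 - a))) by (apply Rmult_le_compat_l; lra). lra.
    intros i Hi. replace (S m - i)%nat with (S (m - i)) by lia. simpl. ring.
Qed.

Lemma two_sided a b C k0 M : 0 <= a < 1 -> 0 <= b < 1 -> 0 <= C ->
  sum_f_R0 (fun k => if (k <? k0)%nat then a ^ (k0 - 1 - k) else C * b ^ (k - k0)) M
  <= 1 / (1 - a) + C / (1 - b).
Proof.
  intros Ha Hb HC.
  assert (P1 : 0 < 1 / (1 - a)) by (apply Rdiv_lt_0_compat; lra).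
  assert (P2 : 0 <= C / (1 - b)) by (apply Rmult_le_pos; auto; left; apply Rinv_0_lt_compat; lra).
  assert (Hnn : forall k, 0 <= (if (k <? k0)%nat then a ^ (k0 - 1 - k) else C * b ^ (k - k0))).
  { intro k. destruct (k <? k0)%nat. apply pow_le; lra. apply Rmult_le_pos; auto. apply pow_le; lra. }
  assert (G : forall M', sum_f_R0 (fun i => C * b ^ i) M' <= C / (1 - b)).
  { intro M'. rewrite (sum_eq _ (fun i => b ^ i * C)) by (intros; ring). rewrite <- scal_sum.
    unfold Rdiv. replace (C * / (1 - b)) with (C * (1 / (1 - b))) by (field; lra).
    apply Rmult_le_compat_l; auto. apply geo_sum; auto. }
  destruct k0 as [|k1].
  - rewrite (sum_eq _ (fun i => C * b ^ i)). pose proof (G M); lra.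
    intros i _. simpl. replace (i - 0)%nat with i by lia. reflexivity.
  - assert (F1 : sum_f_R0 (fun k => if (k <? S k1)%nat then a ^ (S k1 - 1 - k) else C * b ^ (k - S k1)) k1 <= 1 / (1 - a)).
    { rewrite (sum_eq _ (fun k => a ^ (k1 - k))). apply rev_geo; auto.
      intros i Hi. assert ((i <? S k1)%nat = true) as -> by (apply Nat.ltb_lt; lia). f_equal; lia. }
    destruct (le_lt_dec M k1).
    + pose proof (psum_mono _ M k1 Hnn l). lra.
    + rewrite (tech2 _ k1 M l).
      match goal with |- _ + sum_f_R0 ?g _ <= _ => rewrite (sum_eq g (fun i => C * b ^ i)) end.
      pose proof (G (M - S k1)%nat). lra.
      intros i _. assert ((S k1 + i <? S k1)%nat = false) as -> by (apply Nat.ltb_ge; lia). f_equal. f_equal. lia.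
Qed.

Lemma count_sum K0 M : sum_f_R0 (fun k => if (k <? K0)%nat then 1 else 0) M <= INR K0.
Proof.
  assert (forall M, sum_f_R0 (fun k => if (k <? K0)%nat then 1 else 0) M <= INR (Nat.min (S M) K0)).
  { induction M0.
    - destruct K0 as [|K]; simpl; lra.
    - simpl sum_f_R0. destruct (Nat.ltb_spec (S M0) K0).
      + replace (Nat.min (S (S M0)) K0) with (S (S M0)) by lia.
        replace (Nat.min (S M0) K0) with (S M0) in IHM0 by lia. rewrite S_INR. lra.
      + replace (Nat.min (S (S M0)) K0) with K0 by lia.
        replace (Nat.min (S M0) K0) with K0 in IHM0 by lia. lra. }
  eapply Rle_trans. apply H. apply le_INR. lia.
Qed.

Lemma large_term (mu : R -> R) B (HB : 0 < B)
  (mu_pos : forall r, 0 <= r < 1 -> 0 < mu r) (beta : nat)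
  (Hdbl : forall N y, 1 <= N -> N <= y -> B * mu (1 - / N) <= (y / N) ^ beta * mu (1 - / y))
  r nn w : 1/2 <= r < 1 -> (1 <= nn)%nat -> / (1 - r) <= INR nn -> 0 < w ->
  1 <= INR nn * (1 - r) * w ->
  r ^ pred nn * mu r <= (2 * (2 * INR (S beta) + 1) ^ (S beta) / B) * w * mu (1 - / INR nn).
Proof.
  intros Hr Hn HN Hw Hx.
  assert (Hd : 0 < 1 - r) by lra.
  assert (HN1 : 1 <= / (1 - r)). { rewrite <- Rinv_1. apply Rinv_le_contravar; lra. }
  assert (Er : 1 - / / (1 - r) = r) by (rewrite Rinv_inv; ring).
  pose proof (Hdbl (/ (1 - r)) (INR nn) HN1 HN) as h1. rewrite Er in h1.
  replace (INR nn / / (1 - r)) with (INR nn * (1 - r)) in h1 by (field; lra).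
  set (x := INR nn * (1 - r)) in *.
  assert (Hx1 : 1 <= x). { unfold x. apply Rmult_le_reg_r with (/ (1 - r)). apply Rinv_0_lt_compat; lra.
    rewrite Rmult_assoc, Rinv_r, Rmult_1_l, Rmult_1_r by lra. lra. }
  pose proof (polygeo (S beta) (1 - r) nn ltac:(lra)) as h3. replace (1 - (1 - r)) with r in h3 by ring.
  fold x in h3. simpl (x ^ S beta) in h3.
  assert (h2 : r ^ pred nn <= 2 * r ^ nn) by (apply pow_pred_le; lra).
  set (P := (2 * INR (S beta) + 1) ^ S beta) in *.
  assert (Hmk : 0 < mu (1 - / INR nn)) by (apply mu_pos, inv_range; lra).
  assert (Hmr : 0 < mu r) by (apply mu_pos; lra).
  assert (0 <= r ^ nn) by (apply pow_le; lra).
  assert (0 <= r ^ pred nn) by (apply pow_le; lra).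
  assert (1 <= x ^ beta) by (apply pow_R1_Rle; lra).
  assert (K : B * (r ^ pred nn * mu r) <= 2 * P * w * mu (1 - / INR nn)).
  { apply Rle_trans with (2 * r ^ nn * (B * mu r)).
    { replace (B * (r ^ pred nn * mu r)) with (r ^ pred nn * (B * mu r)) by ring.
      apply Rmult_le_compat_r; nra. }
    apply Rle_trans with (2 * r ^ nn * (x ^ beta * mu (1 - / INR nn))).
    { apply Rmult_le_compat_l; nra. }
    apply Rle_trans with (2 * r ^ nn * (x ^ beta * (x * w) * mu (1 - / INR nn))).
    { apply Rmult_le_compat_l. nra. apply Rmult_le_compat_r. lra. nra. }
    replace (2 * r ^ nn * (x ^ beta * (x * w) * mu (1 - / INR nn))) with
      (2 * w * mu (1 - / INR nn) * (x * x ^ beta * r ^ nn)) by ring.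
    replace (2 * P * w * mu (1 - / INR nn)) with (2 * w * mu (1 - / INR nn) * P) by ring.
    apply Rmult_le_compat_l. nra. lra. }
  replace (2 * P / B * w * mu (1 - / INR nn)) with ((2 * P * w * mu (1 - / INR nn)) / B) by (field; lra).
  apply Rmult_le_reg_l with B; auto.
  replace (B * (2 * P * w * mu (1 - / INR nn) / B)) with (2 * P * w * mu (1 - / INR nn)) by (field; lra).
  lra.
Qed.

Lemma main_est (mu : R -> R)
  (mu_pos : forall r, 0 <= r < 1 -> 0 < mu r)
  (mu_decr : forall r s, 0 <= r -> r <= s -> s < 1 -> mu s <= mu r)
  (B : R) (HB : 0 < B)
  (mu_doubling : forall d, 0 < d <= 1 -> mu (1 - d / 2) >= B * mu (1 - d))
  (mu_gap : forall q, 1 < q -> exists A y0, 1 < A /\ 1 <= y0 /\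
      forall y x, y0 < y -> q * y < x -> mu (1 - / y) > A * mu (1 - / x))
  (n : nat -> nat) (lambda : R) (Hlambda : 1 < lambda)
  (n_pos : forall k, (0 < n k)%nat)
  (n_gap : forall k, INR (n (S k)) >= lambda * INR (n k)) :
  exists K, 0 <= K /\ forall r, 1/2 <= r < 1 -> forall M,
    sum_f_R0 (fun k => r ^ pred (n k) / mu (1 - / INR (n k))) M <= K / mu r.
Proof.
  destruct (mu_gap ((1 + lambda) / 2) ltac:(lra)) as [A [y0 [HA [Hy0 Hgap]]]].
  destruct (dbl_poly2 mu B HB mu_pos mu_decr mu_doubling) as [beta Hdbl].
  set (CL := 2 * (2 * INR (S beta) + 1) ^ (S beta) / B).
  assert (HCL : 0 <= CL). { unfold CL. apply Rmult_le_pos. apply Rmult_le_pos. lra. apply pow_le.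
    pose proof (pos_INR (S beta)); lra. left; apply Rinv_0_lt_compat; auto. }
  destruct (pow_unbounded lambda y0 Hlambda) as [K0 HK0].
  assert (Hla : 0 <= / A < 1). { split. left; apply Rinv_0_lt_compat; lra. rewrite <- Rinv_1; apply Rinv_lt_contravar; lra. }
  assert (Hll : 0 <= / lambda < 1). { split. left; apply Rinv_0_lt_compat; lra. rewrite <- Rinv_1; apply Rinv_lt_contravar; lra. }
  exists (INR K0 + (1 / (1 - / A) + CL / (1 - / lambda))). split.
  { pose proof (pos_INR K0). assert (0 < 1 / (1 - / A)) by (apply Rdiv_lt_0_compat; lra).
    assert (0 <= CL / (1 - / lambda)) by (apply Rmult_le_pos; auto; left; apply Rinv_0_lt_compat; lra). lra. }
  intros r Hr M.
  assert (Hlk : forall k, lambda ^ k <= INR (n k)).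
  { intro k. pose proof (lac_shift n lambda Hlambda n_gap k 0). simpl in H.
    assert (1 <= INR (n 0%nat)) by (apply (le_INR 1); apply n_pos). assert (0 < lambda ^ k) by (apply pow_lt; lra). nra. }
  set (N := / (1 - r)).
  assert (HN1 : 1 <= N). { unfold N. rewrite <- Rinv_1. apply Rinv_le_contravar; lra. }
  assert (Er : 1 - / N = r) by (unfold N; rewrite Rinv_inv; ring).
  destruct (least_nat (fun k => N < INR (n k))) as [k0 [Hk0 Hk0min]].
  { intro k. destruct (Rlt_dec N (INR (n k))); auto. }
  { destruct (pow_unbounded lambda N Hlambda) as [k Hk]. exists k. specialize (Hlk k). lra. }
  assert (Hmr : 0 < mu r) by (apply mu_pos; lra).
  set (g := fun k => if (k <? K0)%nat then 1 else 0).
  set (h := fun k => if (k <? k0)%nat then (/ A) ^ (k0 - 1 - k) else CL * (/ lambda) ^ (k - k0)).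
  assert (Hg0 : forall k, 0 <= g k). { intro k; unfold g; destruct (k <? K0)%nat; lra. }
  assert (Hh0 : forall k, 0 <= h k). { intro k; unfold h; destruct (k <? k0)%nat. apply pow_le; lra.
    apply Rmult_le_pos; auto; apply pow_le; lra. }
  assert (Hterm : forall k, r ^ pred (n k) * mu r <= (g k + h k) * mu (1 - / INR (n k))).
  { intro k.
    assert (Hn1 : 1 <= INR (n k)) by (apply (le_INR 1); apply n_pos).
    assert (Hmk : 0 < mu (1 - / INR (n k))) by (apply mu_pos, inv_range; lra).
    assert (Hrp : 0 <= r ^ pred (n k) <= 1) by (split; [apply pow_le; lra| apply pow_le_1; lra]).
    destruct (le_lt_dec k0 k) as [Hk|Hk].
    -
      assert (Hh : h k = CL * (/ lambda) ^ (k - k0)).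
      { unfold h. assert ((k <? k0)%nat = false) as -> by (apply Nat.ltb_ge; lia). reflexivity. }
      pose proof (lac_shift n lambda Hlambda n_gap (k - k0) k0) as Hs.
      replace (k0 + (k - k0))%nat with k in Hs by lia.
      assert (Hpl : 0 < lambda ^ (k - k0)) by (apply pow_lt; lra).
      assert (HNn : N <= INR (n k)). { assert (1 <= lambda ^ (k - k0)) by (apply pow_R1_Rle; lra). nra. }
      assert (Hw : 0 < (/ lambda) ^ (k - k0)) by (apply pow_lt; apply Rinv_0_lt_compat; lra).
      assert (Hx : 1 <= INR (n k) * (1 - r) * (/ lambda) ^ (k - k0)).
      { rewrite pow_inv. assert (Ed : 1 - r = / N) by (unfold N; rewrite Rinv_inv; auto).
        rewrite Ed. apply Rmult_le_reg_r with (N * lambda ^ (k - k0)). nra.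
        replace (INR (n k) * / N * / lambda ^ (k - k0) * (N * lambda ^ (k - k0))) with (INR (n k)) by (field; lra). nra. }
      pose proof (large_term mu B HB mu_pos beta Hdbl r (n k) ((/ lambda) ^ (k - k0)) Hr (n_pos k) HNn Hw Hx).
      fold CL in H. rewrite Hh. specialize (Hg0 k). nra.
    - assert (Hh : h k = (/ A) ^ (k0 - 1 - k)).
      { unfold h. assert ((k <? k0)%nat = true) as -> by (apply Nat.ltb_lt; lia). reflexivity. }
      assert (HnN : INR (n k) <= N) by (apply Rnot_lt_le, Hk0min; auto).
      destruct (Rlt_dec y0 (INR (n k))) as [Hy|Hy].
      + assert (HnN' : INR (n (k0 - 1)%nat) <= N) by (apply Rnot_lt_le, Hk0min; lia).
        pose proof (lac_shift n lambda Hlambda n_gap (k0 - 1 - k) k) as Hs.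
        replace (k + (k0 - 1 - k))%nat with (k0 - 1)%nat in Hs by lia.
        pose proof (chain mu A y0 lambda ((1 + lambda) / 2) mu_pos mu_decr ltac:(lra) ltac:(lra) HA Hy0 Hgap
          (k0 - 1 - k) (INR (n k)) N Hy ltac:(lra)) as Hc.
        rewrite Er in Hc. rewrite Hh.
        assert (E1 : (/ A) ^ (k0 - 1 - k) * A ^ (k0 - 1 - k) = 1).
        { rewrite <- Rpow_mult_distr, Rinv_l, pow1; lra. }
        assert (0 < (/ A) ^ (k0 - 1 - k)) by (apply pow_lt; apply Rinv_0_lt_compat; lra).
        specialize (Hg0 k).
        apply Rle_trans with ((/ A) ^ (k0 - 1 - k) * mu (1 - / INR (n k))).
        { apply Rle_trans with (mu r). nra.
          apply Rle_trans with ((/ A) ^ (k0 - 1 - k) * (A ^ (k0 - 1 - k) * mu r)). nra.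
          apply Rmult_le_compat_l; lra. }
        nra.
      + assert (Hg : g k = 1).
        { unfold g. destruct (Nat.ltb_spec k K0); auto.
          exfalso. assert (lambda ^ K0 <= lambda ^ k) by (apply Rle_pow; [lra|lia]). specialize (Hlk k). lra. }
        assert (mu r <= mu (1 - / INR (n k))).
        { apply mu_decr. apply inv_range; lra. rewrite <- Er. apply inv_mono; lra. lra. }
        rewrite Hg. specialize (Hh0 k). nra. }
  apply Rle_trans with (sum_f_R0 (fun k => (g k + h k) * / mu r) M).
  { apply sum_Rle. intros k _. specialize (Hterm k).
    assert (Hn1 : 1 <= INR (n k)) by (apply (le_INR 1); apply n_pos).
    assert (Hmk : 0 < mu (1 - / INR (n k))) by (apply mu_pos, inv_range; lra).
    unfold Rdiv. apply Rmult_le_reg_r with (mu (1 - / INR (n k)) * mu r). nra.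
    replace (r ^ pred (n k) * / mu (1 - / INR (n k)) * (mu (1 - / INR (n k)) * mu r)) with (r ^ pred (n k) * mu r) by (field; lra).
    replace ((g k + h k) * / mu r * (mu (1 - / INR (n k)) * mu r)) with ((g k + h k) * mu (1 - / INR (n k))) by (field; lra).
    auto. }
  rewrite <- scal_sum, sum_plus. rewrite Rmult_comm. unfold Rdiv. apply Rmult_le_compat_r.
  left; apply Rinv_0_lt_compat; auto.
  apply Rplus_le_compat. apply count_sum. apply two_sided; auto.
Qed.

Lemma dot_le a1 a2 b1 b2 : Rabs (a1 * b1 + a2 * b2) <= cn (a1, a2) * cn (b1, b2).
Proof.
  apply Rsqr_incr_0_var. 2: apply Rmult_le_pos; apply cn_nonneg.
  rewrite <- Rsqr_abs. unfold Rsqr.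
  replace (cn (a1, a2) * cn (b1, b2) * (cn (a1, a2) * cn (b1, b2))) with
    ((cn (a1, a2) * cn (a1, a2)) * (cn (b1, b2) * cn (b1, b2))) by ring.
  rewrite !cn_sq. unfold cn2; simpl.
  pose proof (Rle_0_sqr (a1 * b2 - a2 * b1)). unfold Rsqr in *. nra.
Qed.

Lemma grad_term ar ai m x y :
  cn (re_term (INR m * ar) (INR m * ai) (pred m) x y, re_term (- (INR m * ai)) (INR m * ar) (pred m) x y)
  = INR m * cn (ar, ai) * cn (x, y) ^ pred m.
Proof.
  assert (E : cn (re_term (INR m * ar) (INR m * ai) (pred m) x y, re_term (- (INR m * ai)) (INR m * ar) (pred m) x y)
    = cn (cmul (csc (INR m) (ar, ai)) (cpow x y (pred m)))).
  { rewrite !re_term_eq. destruct (cpow x y (pred m)). unfold cn, cn2, cmul, csc; simpl. f_equal. ring. }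
  rewrite E, cn_mul, cn_sc, cn_pow, Rabs_right by (apply Rle_ge, pos_INR). ring.
Qed.

Lemma grad_bound (gx gy : nat -> R) (b : nat -> R) :
  summable gx -> summable gy -> summable b ->
  (forall k, cn (gx k, gy k) <= b k) ->
  sqrt (Sig gx * Sig gx + Sig gy * Sig gy) <= Sig b.
Proof.
  intros Hx Hy Hb Hk.
  assert (Hb0 : 0 <= Sig b).
  { apply Sig_nonneg; auto. intro k. specialize (Hk k). pose proof (cn_nonneg (gx k, gy k)). lra. }
  set (s := sqrt (Sig gx * Sig gx + Sig gy * Sig gy)).
  assert (Hs0 : 0 <= s) by apply sqrt_pos.
  assert (Hss : s * s = Sig gx * Sig gx + Sig gy * Sig gy) by (apply sqrt_sqrt; nra).
  destruct (Req_dec s 0) as [Hz|Hnz]. lra.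
  assert (E : Sig gx * Sig gx + Sig gy * Sig gy = Sig (fun k => Sig gx * gx k + Sig gy * gy k)).
  { rewrite Sig_plus, !Sig_scal; auto; apply summable_scal; auto. }
  assert (Hle : Sig (fun k => Sig gx * gx k + Sig gy * gy k) <= Sig (fun k => s * b k)).
  { apply Sig_le. 2: apply summable_plus; apply summable_scal; auto. 2: apply summable_scal; auto.
    intro k. eapply Rle_trans. apply Rle_abs. eapply Rle_trans. apply dot_le.
    apply Rmult_le_compat. apply cn_nonneg. apply cn_nonneg. right; reflexivity. apply Hk. }
  rewrite Sig_scal in Hle by auto. nra.
Qed.

Theorem corollary7
  (mu : R -> R)
  (* mu : [0,1) -> (0,oo), decreasing, continuous, mu(r) -> 0 as r -> 1^- *)
  (mu_pos : forall r, 0 <= r < 1 -> 0 < mu r)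
  (mu_decr : forall r s, 0 <= r -> r <= s -> s < 1 -> mu s <= mu r)
  (mu_cont : forall r, 0 <= r < 1 -> forall eps, 0 < eps -> exists delta,
      0 < delta /\ forall s, 0 <= s < 1 -> Rabs (s - r) < delta ->
        Rabs (mu s - mu r) < eps)
  (mu_lim : forall eps, 0 < eps -> exists delta, 0 < delta /\
      forall r, 1 - delta < r < 1 -> mu r < eps)
  (B : R) (HB : 0 < B)
  (mu_doubling : forall d, 0 < d <= 1 -> mu (1 - d / 2) >= B * mu (1 - d))
  (mu_gap : forall q, 1 < q -> exists A y0, 1 < A /\ 1 <= y0 /\
      forall y x, y0 < y -> q * y < x -> mu (1 - / y) > A * mu (1 - / x))
  (* Hadamard gap series u(z) = Re sum_k a_k z^(n k), a_k = ar k + i ai k *)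
  (n : nat -> nat) (lambda : R) (Hlambda : 1 < lambda)
  (n_pos : forall k, (0 < n k)%nat)
  (n_gap : forall k, INR (n (S k)) >= lambda * INR (n k))
  (ar ai : nat -> R)
  (Hcoef : exists C, forall k,
      INR (n k) * sqrt (ar k * ar k + ai k * ai k) * mu (1 - / INR (n k)) <= C) :
  exists u : R -> R -> R,
    (forall x y, in_disk x y ->
       infinite_sum (fun k => re_term (ar k) (ai k) (n k) x y) (u x y)) /\
    in_Bloch_mu mu u.
Proof.
  destruct Hcoef as [C HC].
  assert (Hn1 : forall k, 1 <= INR (n k)) by (intro k; apply (le_INR 1); apply n_pos).
  assert (Hmk : forall k, 0 < mu (1 - / INR (n k))) by (intro k; apply mu_pos, inv_range, Hn1).
  assert (HC' : forall k, INR (n k) * cn (ar k, ai k) * mu (1 - / INR (n k)) <= C) by exact HC.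
  assert (HC0 : 0 <= C).
  { specialize (HC' 0%nat). pose proof (Hn1 0%nat). pose proof (Hmk 0%nat). pose proof (cn_nonneg (ar 0%nat, ai 0%nat)).
    assert (0 <= INR (n 0%nat) * cn (ar 0%nat, ai 0%nat) * mu (1 - / INR (n 0%nat))).
    { apply Rmult_le_pos. apply Rmult_le_pos; lra. lra. } lra. }
  destruct (main_est mu mu_pos mu_decr B HB mu_doubling mu_gap n lambda Hlambda n_pos n_gap) as [K [HK0 HK]].
  set (bmaj := fun r k => INR (n k) * cn (ar k, ai k) * r ^ pred (n k)).
  assert (Hb0 : forall r k, 0 <= r -> 0 <= bmaj r k).
  { intros r k Hr. unfold bmaj. apply Rmult_le_pos. apply Rmult_le_pos. pose proof (Hn1 k); lra. apply cn_nonneg. apply pow_le; auto. }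
  assert (Hmaj1 : forall r, 1/2 <= r < 1 -> forall M, sum_f_R0 (bmaj r) M <= C * K / mu r).
  { intros r Hr M. apply Rle_trans with (sum_f_R0 (fun k => C * (r ^ pred (n k) / mu (1 - / INR (n k)))) M).
    - apply sum_Rle. intros k _. unfold bmaj. specialize (HC' k). specialize (Hmk k).
      assert (0 <= r ^ pred (n k)) by (apply pow_le; lra).
      unfold Rdiv. replace (INR (n k) * cn (ar k, ai k) * r ^ pred (n k)) with
        ((INR (n k) * cn (ar k, ai k) * mu (1 - / INR (n k))) * (r ^ pred (n k) * / mu (1 - / INR (n k)))) by (field; lra).
      apply Rmult_le_compat_r; auto. apply Rmult_le_pos; auto. left; apply Rinv_0_lt_compat; auto.
    - rewrite (sum_eq _ (fun k => (r ^ pred (n k) / mu (1 - / INR (n k))) * C)) by (intros; ring).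
      rewrite <- scal_sum. unfold Rdiv at 2. rewrite Rmult_assoc. apply Rmult_le_compat_l; auto; apply HK; auto. }
  assert (Hmaj : forall r, 0 <= r < 1 -> forall M, sum_f_R0 (bmaj r) M <= C * K / mu (Rmax r (1/2))).
  { intros r Hr M. apply Rle_trans with (sum_f_R0 (bmaj (Rmax r (1/2))) M).
    - apply sum_Rle. intros k _. unfold bmaj. apply Rmult_le_compat_l.
      apply Rmult_le_pos. pose proof (Hn1 k); lra. apply cn_nonneg. apply pow_incr. split. lra. apply Rmax_l.
    - apply Hmaj1. split. apply Rmax_r. apply Rmax_lub_lt; lra. }
  assert (Hmajs : forall r, 0 <= r < 1 -> summable (bmaj r)).
  { intros r Hr. apply summable_bounded with (C * K / mu (Rmax r (1/2))). intro k; apply Hb0; lra. apply Hmaj; auto. }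
  assert (HG : Good ar ai n).
  { intros rho Hr j. set (sig := (1 + rho) / 2). set (dl := 1 - rho / sig).
    assert (Hsig : 1/2 <= sig < 1) by (unfold sig; lra).
    assert (Hdl : 0 < dl <= 1). { unfold dl, sig. split. apply Rlt_Rminus. apply Rmult_lt_reg_r with ((1 + rho) / 2). lra.
      unfold Rdiv. rewrite Rmult_assoc, Rinv_l by lra. lra. assert (0 <= rho / ((1 + rho) / 2)) by (apply Rmult_le_pos; [lra|left; apply Rinv_0_lt_compat; lra]). lra. }
    set (Pj := (2 * INR j + 1) ^ j).
    assert (Hdj : 0 < dl ^ j) by (apply pow_lt; lra).
    apply summable_le with (fun k => (Pj / dl ^ j) * bmaj sig k).
    2: { apply summable_scal. apply Hmajs. lra. }
    intro k. specialize (Hn1 k).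
    assert (0 <= cn (ar k, ai k)) by apply cn_nonneg.
    assert (0 <= INR (n k) ^ j) by (apply pow_le; lra).
    assert (0 <= rho ^ n k) by (apply pow_le; lra).
    split. apply Rmult_le_pos; auto. apply Rmult_le_pos; auto.
    unfold bmaj.
    pose proof (polygeo j dl (n k) Hdl) as Hp. fold Pj in Hp.
    assert (E1 : 1 - dl = rho / sig) by (unfold dl; ring).
    rewrite E1 in Hp. rewrite !Rpow_mult_distr in Hp.
    assert (E2 : rho ^ n k = (rho / sig) ^ n k * sig ^ n k).
    { rewrite <- Rpow_mult_distr. f_equal. field. unfold sig; lra. }
    assert (H3 : sig ^ n k <= sig ^ pred (n k)).
    { destruct (n k) as [|m]. simpl; lra. simpl. assert (0 <= sig ^ m) by (apply pow_le; lra). nra. }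
    assert (0 <= sig ^ n k) by (apply pow_le; lra).
    assert (H4 : INR (n k) ^ j * rho ^ n k * dl ^ j <= Pj * sig ^ n k).
    { rewrite E2. replace (INR (n k) ^ j * ((rho / sig) ^ n k * sig ^ n k) * dl ^ j) with
        (INR (n k) ^ j * dl ^ j * (rho / sig) ^ n k * sig ^ n k) by ring.
      apply Rmult_le_compat_r; auto. }
    assert (H5 : INR (n k) ^ j * rho ^ n k <= Pj / dl ^ j * (INR (n k) * sig ^ pred (n k))).
    { apply Rmult_le_reg_r with (dl ^ j); auto.
      replace (Pj / dl ^ j * (INR (n k) * sig ^ pred (n k)) * dl ^ j) with (Pj * (INR (n k) * sig ^ pred (n k))) by (field; lra).
      apply Rle_trans with (Pj * sig ^ n k); auto. apply Rmult_le_compat_l. unfold Pj; apply pow_le; pose proof (pos_INR j); lra.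
      assert (0 <= sig ^ pred (n k)) by (apply pow_le; lra). nra. }
    replace (Pj / dl ^ j * (INR (n k) * cn (ar k, ai k) * sig ^ pred (n k))) with
      (cn (ar k, ai k) * (Pj / dl ^ j * (INR (n k) * sig ^ pred (n k)))) by ring.
    rewrite Rmult_assoc. apply Rmult_le_compat_l; auto. }
  exists (F ar ai n). split.
  { intros x y Hd. apply disk_cn in Hd. destruct (rad_prop x y Hd) as [Hr Hlt].
    apply Sig_spec. apply (good_summable _ _ _ _ _ (rad x y) HG Hr). lra. }
  assert (G1x := good_dx _ _ _ HG). assert (G1y := good_dy _ _ _ HG).
  exists (F (dxr ar n) (dxr ai n) (de n)), (F (dyr ai n) (dxr ar n) (de n)),
    (F (dxr (dxr ar n) (de n)) (dxr (dxr ai n) (de n)) (de (de n))),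
    (F (dyr (dxr ai n) (de n)) (dxr (dxr ar n) (de n)) (de (de n))),
    (F (dxr (dyr ai n) (de n)) (dxr (dxr ar n) (de n)) (de (de n))),
    (F (dyr (dxr ar n) (de n)) (dxr (dyr ai n) (de n)) (de (de n))).
  split. apply F_partial_x; auto.
  split. apply F_partial_y; auto.
  split. apply F_partial_x; auto.
  split. apply F_partial_y; auto.
  split. apply F_partial_x; auto.
  split. apply F_partial_y; auto.
  split. apply F_cont; auto.
  split. apply F_cont; auto.
  split. apply F_cont; auto.
  split. apply F_cont, good_dx; auto.
  split. apply F_cont, good_dy; auto.
  split. apply F_cont, good_dx; auto.
  split. apply F_cont, good_dy; auto.
  split. intros x y Hd. apply F_harm; auto.
  assert (Hm0 : 0 < mu (1/2)) by (apply mu_pos; lra).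
  assert (Hm00 : mu (1/2) <= mu 0) by (apply mu_decr; lra).
  exists (Rabs (F ar ai n 0 0) + C * K * (mu 0 / mu (1/2))).
  intros x y Hd. apply Rplus_le_compat_l.
  assert (Hd' := disk_cn x y Hd). destruct (rad_prop x y Hd') as [Hr Hlt].
  change (sqrt (x * x + y * y)) with (cn (x, y)).
  set (r := cn (x, y)) in *. assert (Hr0 : 0 <= r) by apply cn_nonneg.
  assert (Hgr : sqrt (F (dxr ar n) (dxr ai n) (de n) x y * F (dxr ar n) (dxr ai n) (de n) x y +
                      F (dyr ai n) (dxr ar n) (de n) x y * F (dyr ai n) (dxr ar n) (de n) x y) <= Sig (bmaj r)).
  { unfold F. apply grad_bound.
    - apply (good_summable _ _ _ _ _ (rad x y) G1x Hr). fold r; lra.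
    - apply (good_summable _ _ _ _ _ (rad x y) G1y Hr). fold r; lra.
    - apply Hmajs. lra.
    - intro k. unfold dxr, dyr, de, bmaj. rewrite grad_term. fold r. right; reflexivity. }
  assert (HL : Sig (bmaj r) <= C * K / mu (Rmax r (1/2))).
  { apply Sig_nonneg_bound. intro k; apply Hb0; auto. apply Hmaj. lra. }
  assert (Hmr : 0 < mu r) by (apply mu_pos; lra).
  assert (Hmr' : 0 < mu (Rmax r (1/2))).
  { apply mu_pos. split. pose proof (Rmax_r r (1/2)); lra. apply Rmax_lub_lt; lra. }
  assert (Hratio : mu r / mu (Rmax r (1/2)) <= mu 0 / mu (1/2)).
  { destruct (Rle_dec (1/2) r).
    - rewrite Rmax_left by lra. unfold Rdiv. rewrite Rinv_r by lra.
      apply Rmult_le_reg_r with (mu (1/2)); auto. rewrite Rmult_assoc, Rinv_l by lra. lra.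
    - rewrite Rmax_right by lra. unfold Rdiv. apply Rmult_le_compat_r. left; apply Rinv_0_lt_compat; auto.
      apply mu_decr; lra. }
  assert (HCK : 0 <= C * K) by (apply Rmult_le_pos; auto).
  apply Rle_trans with (mu r * Sig (bmaj r)).
  apply Rmult_le_compat_l; lra.
  apply Rle_trans with (mu r * (C * K / mu (Rmax r (1/2)))).
  apply Rmult_le_compat_l; lra.
  replace (mu r * (C * K / mu (Rmax r (1/2)))) with (C * K * (mu r / mu (Rmax r (1/2)))) by (field; lra).
  apply Rmult_le_compat_l; auto.
Qed.
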